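(* Let $\mathbb M=(V,d)$ be a binary structure and let $A,B$ be robust modules of $\mathbb M$, each with at least two elements, such that $B\subsetneq A$, the Gallai quotients of $A$ and of $B$ are not prime, and $t(A)=t(B)$. Then there is a robust module $C$ with $B\subsetneq C\subsetneq A$ whose type is different from $t(A)$.
   Context: A binary structure over a set $W$ is a pair $\mathbb M=(V,d)$ with $d:V\times V\to W$. A module of $\mathbb M$ is a set $A\subseteq V$ such that $d(x,y)=d(x,y')$ and $d(y,x)=d(y',x)$ for all $x\in V\setminus A$ and $y,y'\in A$. A module is strong if for every module $B$, either $A\subseteq B$, $B\subseteq A$, or $A\cap B=\emptyset$. For $X\subseteq V$, $S_{\mathbb M}(X)$ is the intersection of all strong modules containing $X$. A module is robust if it is a singleton or equals $S_{\mathbb M}(\{x,y\})$ for some distinct $x,y\in V$. For a strong module $A$ and $x,y\in A$, put $x\equiv_A y$ iff $x=y$ or some strong module containing $x,y$ is properly contained in $A$; this is an equivalence relation whose classes (the components of $A$) are modules, and if $A$ is robust with at least two elements there are at least two components. For disjoint non-empty modules $X,Y$, $d(X,Y)$ denotes the common value of $d(x,y)$, $x\in X$, $y\in Y$. The Gallai quotient of a robust $A$ with $|A|\ge2$ is the binary structure on the set of components of $A$ given by $(I,J)\mapsto d(I,J)$ for $I\neq J$. It is prime if it has at least three elements and only trivial modules (empty, singletons, whole set). The type of $A$ is ''prime'' if its Gallai quotient is prime, and otherwise $t(A)$ is the set $\{d(I,J): I,J$ distinct components of $A\}$. *)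

(* Defs.v *)
From mathcomp Require Import all_boot.
From mathcomp Require Import boolp classical_sets.
Set Implicit Arguments. Unset Strict Implicit. Unset Printing Implicit Defensive.
Local Open Scope classical_set_scope.

Definition is_module (V W : Type) (d : V -> V -> W) (A : set V) : Prop :=
  forall x y y', ~ A x -> A y -> A y' -> d x y = d x y' /\ d y x = d y' x.

Definition is_strong (V W : Type) (d : V -> V -> W) (A : set V) : Prop :=
  is_module d A /\
  forall B, is_module d B -> A `<=` B \/ B `<=` A \/ A `&` B = set0.

Definition S_M (V W : Type) (d : V -> V -> W) (X : set V) : set V :=
  [set v | forall A, is_strong d A -> X `<=` A -> A v].

Definition is_robust (V W : Type) (d : V -> V -> W) (A : set V) : Prop :=
  is_module d A /\
  ((exists x, A = [set x]) \/ (exists x y, x <> y /\ A = S_M d [set x; y])).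

Definition equivA (V W : Type) (d : V -> V -> W) (A : set V) (x y : V) : Prop :=
  x = y \/ exists C, is_strong d C /\ C x /\ C y /\ C `<` A.

Definition components (V W : Type) (d : V -> V -> W) (A : set V) : set (set V) :=
  [set I | exists x, A x /\ I = [set y | A y /\ equivA d A x y]].

(* Modules of the Gallai quotient of A: families of components X such that
   d(I,J) = d(I,J') and d(J,I) = d(J',I) for every component I outside X and
   J, J' in X (d(I,J) being the common value d(x,y), x in I, y in J). *)
Definition quotient_module (V W : Type) (d : V -> V -> W) (A : set V)
    (X : set (set V)) : Prop :=
  X `<=` components d A /\
  forall I J J', components d A I -> ~ X I -> X J -> X J' ->
    forall x y y', I x -> J y -> J' y' -> d x y = d x y' /\ d y x = d y' x.

Definition gallai_prime (V W : Type) (d : V -> V -> W) (A : set V) : Prop :=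
  (exists I J K, components d A I /\ components d A J /\ components d A K /\
     I <> J /\ J <> K /\ I <> K) /\
  forall X, quotient_module d A X ->
    X = set0 \/ (exists I, X = [set I]) \/ X = components d A.

Definition type_set (V W : Type) (d : V -> V -> W) (A : set V) : set W :=
  [set w | exists I J, components d A I /\ components d A J /\ I <> J /\
     exists x y, I x /\ J y /\ w = d x y].

(* The type t(A): None stands for "prime", Some T for the set T. *)
Definition type_of (V W : Type) (d : V -> V -> W) (A : set V) : option (set W) :=
  if pselect (gallai_prime d A) then None else Some (type_set d A).

Definition atleast2 (V : Type) (A : set V) : Prop :=
  exists x y, A x /\ A y /\ x <> y.

(* Main.v *)
Require Import Defs.
From mathcomp Require Import all_boot.
From mathcomp Require Import boolp classical_sets.
Local Open Scope classical_set_scope.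
Set Implicit Arguments. Unset Strict Implicit.

Lemma meet0 (V : Type) (X Y : set V) z : X `&` Y = set0 -> X z -> Y z -> False.
Proof. move=> H Xz Yz. have : (X `&` Y) z by split. by rewrite H. Qed.

Lemma strong_cmp (V W : Type) (d : V -> V -> W) (D N : set V) z :
  is_strong d D -> is_module d N -> D z -> N z -> D `<=` N \/ N `<=` D.
Proof.
move=> [_ H] mN Dz Nz. case: (H N mN) => [|[|]]; [by left|by right|].
by move=> H0; case: (meet0 H0 Dz Nz).
Qed.

Lemma eqv_refl (V W : Type) (d : V -> V -> W) C x : equivA d C x x.
Proof. by left. Qed.

Lemma eqv_sym (V W : Type) (d : V -> V -> W) C x y :
  equivA d C x y -> equivA d C y x.
Proof. case=> [->|[D [sD [Dx [Dy pD]]]]]; [by left|right; by exists D]. Qed.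

Lemma eqv_trans (V W : Type) (d : V -> V -> W) C x y z :
  equivA d C x y -> equivA d C y z -> equivA d C x z.
Proof.
case=> [->//|[D1 [s1 [D1x [D1y p1]]]]].
case=> [<-|[D2 [s2 [D2y [D2z p2]]]]]; first by right; exists D1.
case: (strong_cmp s1 s2.1 D1y D2y) => H.
- by right; exists D2; split=> //; split=> //; apply: H.
- by right; exists D1; split=> //; split=> //; split=> //; apply: H.
Qed.

Lemma eqv_same (V W : Type) (d : V -> V -> W) C x x' z :
  equivA d C x x' -> ~ equivA d C z x -> d z x = d z x' /\ d x z = d x' z.
Proof.
case=> [->//|[D [sD [Dx [Dx' pD]]]]] nzx.
have nDz : ~ D z by move=> Dz; apply: nzx; right; exists D.
by apply: sD.1.
Qed.

Lemma SM_module (V W : Type) (d : V -> V -> W) X : is_module d (S_M d X).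
Proof.
move=> z y y' nz Sy Sy'.
have [D HD] : exists D, ~ (is_strong d D -> X `<=` D -> D z).
  by apply/existsNP => H; apply: nz; exact: H.
have sD : is_strong d D by apply: contrapT => H; apply: HD => /H.
have XD : X `<=` D by apply: contrapT => H; apply: HD => _ /H.
have nDz : ~ D z by move=> Dz; apply: HD.
by apply: sD.1 => //; [apply: Sy|apply: Sy'].
Qed.

Lemma SM_strong (V W : Type) (d : V -> V -> W) X : is_strong d (S_M d X).
Proof.
split; first exact: SM_module.
move=> N mN.
case: (pselect (exists D, is_strong d D /\ X `<=` D /\ D `<=` N)).
  by move=> [D [sD [XD DN]]]; left => z Sz; apply: DN; apply: Sz.
move=> nE.
case: (pselect (exists m, S_M d X m /\ N m)); last first.
  move=> nm; right; right; rewrite -subset0 => z [Sz Nz]; apply: nm; by exists z.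
move=> [m [Sm Nm]]; right; left => z Nz D sD XD.
case: (strong_cmp sD mN (Sm D sD XD) Nm) => H.
  by exfalso; apply: nE; exists D.
exact: H.
Qed.

Lemma SM_sub (V W : Type) (d : V -> V -> W) X D :
  is_strong d D -> X `<=` D -> S_M d X `<=` D.
Proof. by move=> sD XD z Sz; apply: Sz. Qed.

Lemma SM_in (V W : Type) (d : V -> V -> W) X : X `<=` S_M d X.
Proof. by move=> z Xz D sD XD; apply: XD. Qed.

Lemma robust2 (V W : Type) (d : V -> V -> W) C :
  is_robust d C -> atleast2 C ->
  exists u v, u <> v /\ C = S_M d [set u; v].
Proof.
move=> [_ [[x ->]|//]] [p [q [Pp [Pq npq]]]].
by exfalso; apply: npq; rewrite Pp Pq.
Qed.

Lemma pair_neqv (V W : Type) (d : V -> V -> W) u v :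
  u <> v -> ~ equivA d (S_M d [set u; v]) u v.
Proof.
move=> nuv [//|[D [sD [Du [Dv [_ pD]]]]]]; apply: pD.
apply: SM_sub => // z [->|->] //.
Qed.

Definition nt (V W : Type) (d : V -> V -> W) (C N : set V) :=
  is_module d N /\ N `<=` C /\ (exists c, C c /\ ~ N c) /\
  (exists a b, N a /\ N b /\ ~ equivA d C a b).

Definition overlap (V : Type) (X Y : set V) :=
  (exists m, X m /\ Y m) /\ (exists a, X a /\ ~ Y a) /\ (exists b, Y b /\ ~ X b).

Lemma overlap_sym (V : Type) (X Y : set V) : overlap X Y -> overlap Y X.
Proof.
move=> [[m [Xm Ym]] [[a [Xa Ya]] [b [Yb Xb]]]].
split; first by exists m. by split; [exists b|exists a].
Qed.

Lemma sat (V W : Type) (d : V -> V -> W) C N a b p q :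
  is_module d N -> N `<=` C -> N a -> N b -> ~ equivA d C a b ->
  N p -> equivA d C p q -> N q.
Proof.
move=> mN NC Na Nb nab Np [<-//|[D [sD [Dp [Dq pD]]]]].
case: (strong_cmp sD mN Dp Np) => H; first exact: H.
by exfalso; apply: nab; right; exists D; split=> //; split; [apply: H|split; [apply: H|]].
Qed.

Lemma mod_inter (V W : Type) (d : V -> V -> W) X Y :
  is_module d X -> is_module d Y -> is_module d (X `&` Y).
Proof.
move=> mX mY z y y' nz [Xy Yy] [Xy' Yy'].
case: (pselect (X z)) => Xz.
  by apply: mY => // Yz; apply: nz.
by apply: mX.
Qed.

Lemma mod_bigU (V W : Type) (d : V -> V -> W) (P : set V -> Prop) x :
  (forall X, P X -> is_module d X /\ X x) ->
  is_module d [set z | exists X, P X /\ X z].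
Proof.
move=> HP z y y' nz [X [PX Xy]] [Y [PY Yy']].
have nXz : ~ X z by move=> Xz; apply: nz; exists X.
have nYz : ~ Y z by move=> Yz; apply: nz; exists Y.
have [mX Xx] := HP X PX; have [mY Yx] := HP Y PY.
have [h1 h2] := mX z y x nXz Xy Xx.
have [h3 h4] := mY z y' x nYz Yy' Yx.
by rewrite h1 h2 h3 h4.
Qed.

Lemma mod_U2 (V W : Type) (d : V -> V -> W) X Y m :
  is_module d X -> is_module d Y -> X m -> Y m -> is_module d (X `|` Y).
Proof.
move=> mX mY Xm Ym.
have -> : X `|` Y = [set z | exists Z, (Z = X \/ Z = Y) /\ Z z].
  rewrite eqEsubset; split => z.
    by case=> H; [exists X|exists Y]; split=> //; [left|right].
  by move=> [Z [[->|->] Zz]]; [left|right].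
by apply: (@mod_bigU _ _ _ _ m) => Z [->|->].
Qed.

Lemma mod_diff (V W : Type) (d : V -> V -> W) X Y w :
  is_module d X -> is_module d Y -> Y w -> ~ X w -> is_module d (X `\` Y).
Proof.
move=> mX mY Yw Xw z y y' nz [Xy Yy] [Xy' Yy'].
case: (pselect (X z)) => Xz; last by apply: mX.
have Yz : Y z by apply: contrapT => Yz; apply: nz.
have [a1 a2] := mY y z w Yy Yz Yw.
have [b1 b2] := mY y' z w Yy' Yz Yw.
have [c1 c2] := mX w y y' Xw Xy Xy'.
by rewrite a1 a2 b1 b2 c1 c2.
Qed.

Lemma partner (V W : Type) (d : V -> V -> W) C N :
  is_strong d C -> nt d C N -> exists N', nt d C N' /\ overlap N N'.
Proof.
move=> sC [mN [NC [[c [Cc Nc]] [a [b [Na [Nb nab]]]]]]].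
have nsN : ~ is_strong d N.
  move=> sN; apply: nab; right; exists N; split=> //; split=> //; split=> //.
  by split=> // H; apply: Nc; apply: H.
have [N' HN'] : exists N', ~ (is_module d N' -> N `<=` N' \/ N' `<=` N \/ N `&` N' = set0).
  apply/existsNP => H; apply: nsN; split=> // B mB; exact: H.
have mN' : is_module d N' by apply: contrapT => H; apply: HN' => /H.
have HH : ~ (N `<=` N' \/ N' `<=` N \/ N `&` N' = set0) by move=> H; apply: HN'.
move/not_orP: HH => [nNN' /not_orP [nN'N nd]].
have [m [Nm N'm]] : exists m, N m /\ N' m.
  apply: contrapT => H; apply: nd; rewrite -subset0 => z [Nz N'z]; apply: H; by exists z.
have [p [Np N'p]] : exists p, N p /\ ~ N' p.
  apply: contrapT => H; apply: nNN' => z Nz; apply: contrapT => N'z; apply: H; by exists z.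
have [q [N'q Nq]] : exists q, N' q /\ ~ N q.
  apply: contrapT => H; apply: nN'N => z N'z; apply: contrapT => Nz; apply: H; by exists z.
have N'C : N' `<=` C.
  case: (strong_cmp sC mN' (NC m Nm) N'm) => // CN'.
  by exfalso; apply: nNN' => z Nz; apply: CN'; apply: NC.
exists N'; split; last by split; [exists m|split; [exists p|exists q]].
split=> //; split=> //; split; first by exists p; split=> //; apply: NC.
exists m, q; split=> //; split=> // Emq; apply: Nq.
exact: (sat mN NC Na Nb nab Nm Emq).
Qed.

Definition inP (W : Type) (al be : W) (p : W * W) := p = (al, be) \/ p = (be, al).

Definition sep (V : Type) (Y : set V) p q := (~ Y p /\ Y q) \/ (Y p /\ ~ Y q).

Lemma inP_swap (W : Type) (al be a b : W) : inP al be (a, b) -> inP al be (b, a).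
Proof. by case=> [[-> ->]|[-> ->]]; [right|left]. Qed.

Lemma WD (V W : Type) (d : V -> V -> W) X Y a m a' m' :
  is_module d X -> is_module d Y -> overlap X Y ->
  X a -> ~ Y a -> Y m -> X a' -> ~ Y a' -> Y m' ->
  (d a m, d m a) = (d a' m', d m' a').
Proof.
move=> mX mY [_ [_ [w [Yw Xw]]]] Xa Ya Ym Xa' Ya' Ym'.
have [h1 h2] := mY a m w Ya Ym Yw.
have [h3 h4] := mX w a a' Xw Xa Xa'.
have [h5 h6] := mY a' m' w Ya' Ym' Yw.
by rewrite h1 h2 h3 h4 h5 h6.
Qed.

Lemma sep_transfer (V W : Type) (d : V -> V -> W) (al be : W) X Z p q :
  is_module d X -> is_module d Z -> overlap X Z ->
  X p -> X q -> sep Z p q -> inP al be (d p q, d q p) ->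
  forall a m, X a -> ~ Z a -> Z m -> inP al be (d a m, d m a).
Proof.
move=> mX mZ oXZ Xp Xq [[Zp Zq]|[Zp Zq]] H a m Xa Za Zm.
  by rewrite (WD mX mZ oXZ Xa Za Zm Xp Zp Zq).
by rewrite (WD mX mZ oXZ Xa Za Zm Xq Zq Zp); apply: inP_swap.
Qed.

Lemma crossing (V : Type) (X Y Z : set V) :
  overlap X Y -> overlap X Z ->
  exists p q, X p /\ X q /\ sep Y p q /\ sep Z p q.
Proof.
move=> [[b [Xb Yb]] [[a [Xa Ya]] _]] [[f [Xf Zf]] [[c [Xc Zc]] _]].
case: (pselect (Z a)) => Za; case: (pselect (Z b)) => Zb.
- case: (pselect (Y c)) => Yc.
    by exists a, c; do 2 split=> //; split; [left|right].
  by exists c, b; do 2 split=> //; split; [left|left].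
- by exists a, b; do 2 split=> //; split; [left|right].
- by exists a, b; do 2 split=> //; split; [left|left].
- case: (pselect (Y f)) => Yf.
    by exists a, f; do 2 split=> //; split; [left|left].
  by exists f, b; do 2 split=> //; split; [left|right].
Qed.

Definition Good (V W : Type) (d : V -> V -> W) (al be : W) C X :=
  nt d C X /\ exists Y a m, is_module d Y /\ overlap X Y /\
    X a /\ ~ Y a /\ Y m /\ inP al be (d a m, d m a).

Lemma good_pairs (V W : Type) (d : V -> V -> W) al be C X Z :
  Good d al be C X -> is_module d Z -> overlap X Z ->
  forall a m, X a -> ~ Z a -> Z m -> inP al be (d a m, d m a).
Proof.
move=> [[mX _] [Y [a0 [m0 [mY [oXY [Xa0 [Ya0 [Ym0 H0]]]]]]]]] mZ oXZ.
have [p [q [Xp [Xq [sY sZ]]]]] := crossing oXY oXZ.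
apply: (sep_transfer mX mZ oXZ Xp Xq sZ).
case: sY => [[Yp Yq]|[Yp Yq]].
  by rewrite (WD mX mY oXY Xp Yp Yq Xa0 Ya0 Ym0).
apply: inP_swap; by rewrite (WD mX mY oXY Xq Yq Yp Xa0 Ya0 Ym0).
Qed.

Lemma good_overlap (V W : Type) (d : V -> V -> W) al be C X Z :
  Good d al be C X -> nt d C Z -> overlap X Z -> Good d al be C Z.
Proof.
move=> gX nZ oXZ; split=> //.
have oZX := overlap_sym oXZ.
move: (oXZ) => [[m [Xm Zm]] [[c [Xc Zc]] [a [Za Xa]]]].
exists X, a, m; split; first exact: gX.1.1.
do 4 split=> //.
have H := good_pairs gX nZ.1 oXZ Xc Zc Zm.
have [h1 h2] := gX.1.1 a m c Xa Xm Xc.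
have [h3 h4] := nZ.1 c m a Zc Zm Za.
rewrite h1 h2; apply: inP_swap; by rewrite -h3 -h4.
Qed.

Inductive reach (V W : Type) (d : V -> V -> W) (C X0 : set V) : set V -> Prop :=
 | reach0 : reach d C X0 X0
 | reachS Y Z : reach d C X0 Y -> nt d C Z -> overlap Y Z -> reach d C X0 Z.

Lemma reach_nt (V W : Type) (d : V -> V -> W) C X0 Y :
  nt d C X0 -> reach d C X0 Y -> nt d C Y.
Proof. by move=> n0; elim. Qed.

Lemma noov (V : Type) (A B : set V) m :
  ~ overlap A B -> A m -> B m -> A `<=` B \/ B `<=` A.
Proof.
move=> no Am Bm; case: (pselect (A `<=` B)) => AB; first by left.
case: (pselect (B `<=` A)) => BA; first by right.
exfalso; apply: no; split; first by exists m.
split.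
  apply: contrapT => H; apply: AB => z Az; apply: contrapT => Bz; apply: H; by exists z.
apply: contrapT => H; apply: BA => z Bz; apply: contrapT => Az; apply: H; by exists z.
Qed.

Lemma lemK (V W : Type) (d : V -> V -> W) C R Z :
  (forall Y, reach d C R Y -> ~ overlap Y Z) ->
  forall Y, reach d C R Y -> (Y `<=` Z <-> R `<=` Z).
Proof.
move=> HR Y rY; elim: rY => [//|Y1 Y2 rY1 IH nY2 o12].
have no' := HR Y2 (reachS rY1 nY2 o12).
have no := HR Y1 rY1.
move: (o12) => [[m [Ym Y'm]] [[a [Ya Y'a]] [b [Y'b Yb]]]].
rewrite -IH; split => H.
- have Zm : Z m by apply: H.
  case: (noov no Ym Zm) => // ZY.
  by exfalso; apply: Yb; apply: ZY; apply: H.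
- have Zm : Z m by apply: H.
  case: (noov no' Y'm Zm) => // ZY'.
  by exfalso; apply: Y'a; apply: ZY'; apply: H.
Qed.

Lemma cover (V W : Type) (d : V -> V -> W) C X0 :
  is_strong d C -> nt d C X0 ->
  forall c, C c -> exists Y, reach d C X0 Y /\ Y c.
Proof.
move=> sC n0 c Cc; apply: contrapT => nc.
set W0 := [set z | exists Y, reach d C X0 Y /\ Y z].
have [m0 [_ [_ [x0 [b0 [X0x0 [X0b0 nx0b0]]]]]]] := n0.
have mW : is_module d W0.
  move=> z y y' nz Wy Wy'.
  suff HH : forall Y, reach d C X0 Y -> forall y, Y y -> d z y = d z x0 /\ d y z = d x0 z.
    move: Wy Wy' => [Y [rY Yy]] [Y' [rY' Yy']].
    have [h1 h2] := HH Y rY y Yy; have [h3 h4] := HH Y' rY' y' Yy'.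
    by rewrite h1 h2 h3 h4.
  move=> Y rY; elim: rY => [|Y1 Y2 rY1 IH nY2 o12] y1 Yy1.
    by apply: m0 => // H; apply: nz; exists X0; split=> //; apply: reach0.
  move: (o12) => [[m [Y1m Y2m]] _].
  have nz2 : ~ Y2 z by move=> H; apply: nz; exists Y2; split=> //; apply: reachS rY1 nY2 o12.
  have [h1 h2] := nY2.1 z y1 m nz2 Yy1 Y2m.
  have [h3 h4] := IH m Y1m.
  by rewrite h1 h2 h3 h4.
have WC : W0 `<=` C.
  move=> z [Y [rY Yz]]; exact: (reach_nt n0 rY).2.1.
have nW : nt d C W0.
  split=> //; split=> //; split; first by exists c; split.
  exists x0, b0; split; first by exists X0; split=> //; apply: reach0.
  by split=> //; exists X0; split=> //; apply: reach0.
have [Z [nZ oWZ]] := partner sC nW.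
move: (oWZ) => [[m [Wm Zm]] [[a [Wa Za]] [b [Zb Wb]]]].
case: (pselect (exists Y, reach d C X0 Y /\ overlap Y Z)).
  move=> [Y [rY oYZ]]; apply: Wb; exists Z; split=> //; exact: reachS rY nZ oYZ.
move=> nex.
have HR : forall Y, reach d C X0 Y -> ~ overlap Y Z.
  by move=> Y rY oYZ; apply: nex; exists Y.
move: Wm => [Y1 [rY1 Y1m]].
case: (noov (HR Y1 rY1) Y1m Zm) => H.
  have X0Z := (lemK HR rY1).1 H.
  apply: Za; move: Wa => [Y [rY Ya]]; exact: ((lemK HR rY).2 X0Z).
by apply: Wb; exists Y1; split=> //; apply: H.
Qed.

Lemma good_all (V W : Type) (d : V -> V -> W) al be C X0 N :
  is_strong d C -> Good d al be C X0 -> nt d C N -> Good d al be C N.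
Proof.
move=> sC g0 nN; apply: contrapT => gN.
have n0 := g0.1.
have H1 : forall Z, reach d C N Z -> ~ Good d al be C Z.
  move=> Z rZ; elim: rZ => [//|Y1 Y2 rY1 IH nY2 o12] g2.
  apply: IH; apply: (good_overlap g2 (reach_nt nN rY1)); exact: overlap_sym.
have H2 : forall Y, reach d C X0 Y -> Good d al be C Y.
  move=> Y rY; elim: rY => [//|Y1 Y2 rY1 IH nY2 o12].
  exact: good_overlap IH nY2 o12.
have H3 : forall Y Z, reach d C X0 Y -> reach d C N Z -> ~ overlap Y Z.
  move=> Y Z rY rZ oYZ; apply: (H1 Z rZ).
  exact: good_overlap (H2 Y rY) (reach_nt nN rZ) oYZ.
have [_ [X0C [_ [x [_ [X0x _]]]]]] := n0.
have [Z1 [rZ1 Z1x]] := cover sC nN (X0C x X0x).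
have [_ [_ [[c [Cc X0c]] _]]] := n0.
case: (noov (H3 X0 Z1 (reach0 _ _ _) rZ1) X0x Z1x) => H.
- have HR : forall Y, reach d C X0 Y -> ~ overlap Y Z1 by move=> Y rY; apply: H3.
  have [Z2 [rZ2 Z2c]] := cover sC nN Cc.
  have [_ [_ [[c' [Cc' Z1c']] _]]] := reach_nt nN rZ1.
  have [Y [rY Yc']] := cover sC n0 Cc'.
  apply: Z1c'; exact: ((lemK HR rY).2 H).
- have HR : forall Y, reach d C N Y -> ~ overlap Y X0.
    by move=> Y rY oYX; apply: (H3 X0 Y (reach0 _ _ _) rY); apply: overlap_sym.
  have NX0 := (lemK HR rZ1).1 H.
  have [Y [rY Yc]] := cover sC nN Cc.
  apply: X0c; exact: ((lemK HR rY).2 NX0).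
Qed.

Lemma strong_mod (V W : Type) (d : V -> V -> W) C : is_strong d C -> is_module d C.
Proof. by case. Qed.

Lemma Hlemma (V W : Type) (d : V -> V -> W) C X0 x y :
  is_strong d C -> nt d C X0 -> C x -> C y -> ~ equivA d C x y ->
  (forall D, is_module d D -> D x -> D y -> C `<=` D) ->
  exists H V', nt d C H /\ nt d C V' /\ overlap H V' /\ H x /\ ~ H y /\ V' y.
Proof.
move=> sC n0 Cx Cy nxy Hxy.
have [Y [rY Yx]] := cover sC n0 Cx.
have nY := reach_nt n0 rY.
have nYy : ~ Y y.
  move=> Yy; have [_ [_ [[c [Cc Yc]] _]]] := nY; apply: Yc; exact: Hxy nY.1 Yx Yy c Cc.
set P := fun X => nt d C X /\ X x /\ ~ X y.
set H := [set z | exists X, P X /\ X z].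
have mH : is_module d H.
  apply: (@mod_bigU _ _ d P x) => X [nX [Xx _]]; split=> //; exact: nX.1.
have HC : H `<=` C by move=> z [X [[nX _] Xz]]; exact: nX.2.1 z Xz.
have Hx : H x by exists Y.
have nHy : ~ H y by move=> [X [[_ [_ nXy]] Xy]].
have nH : nt d C H.
  split=> //; split=> //; split; first by exists y.
  have [_ [_ [_ [a [b [Ya [Yb nab]]]]]]] := nY.
  by exists a, b; split; [exists Y|split; [exists Y|]].
have [V' [nV oHV]] := partner sC nH.
exists H, V'; do 5 split=> //.
apply: contrapT => nVy.
move: (oHV) => [[m [Hm Vm]] [_ [b [Vb Hb]]]].
have mU := mod_U2 mH nV.1 Hm Vm.
have nU : nt d C (H `|` V').
  split=> //; split; first by move=> z [/HC|/(nV.2.1)].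
  split; first by exists y; split=> //; case.
  have [_ [_ [_ [a [b' [Ha [Hb' nab]]]]]]] := nH.
  by exists a, b'; split; [left|split; [left|]].
apply: Hb; exists (H `|` V'); split; last by right.
by split=> //; split; [left|case].
Qed.


Lemma smallest_mod (V W : Type) (d : V -> V -> W) x y :
  is_module d [set z | forall D, is_module d D -> D x -> D y -> D z].
Proof.
move=> z p q nz Np Nq.
have [D HD] : exists D, ~ (is_module d D -> D x -> D y -> D z).
  by apply/existsNP => H; apply: nz => D; exact: H.
have mD : is_module d D by apply: contrapT => H; apply: HD => /H.
have Dx : D x by apply: contrapT => H; apply: HD => _ /H.
have Dy : D y by apply: contrapT => H; apply: HD => _ _ /H.
have nDz : ~ D z by move=> Dz; apply: HD.
by apply: (mD) => //; [apply: Np|apply: Nq].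
Qed.

Lemma notsub (V : Type) (A B : set V) : ~ A `<=` B -> exists c, A c /\ ~ B c.
Proof.
move=> H; apply: contrapT => H'; apply: H => z Az; apply: contrapT => Bz.
by apply: H'; exists z.
Qed.

Lemma CLi (V W : Type) (d : V -> V -> W) C X0 :
  is_strong d C -> nt d C X0 ->
  exists al be,
  (forall x y, C x -> C y -> ~ equivA d C x y -> inP al be (d x y, d y x)) /\
  (al <> be -> forall x y z, C x -> C y -> C z -> ~ equivA d C x y ->
     ~ equivA d C y z -> ~ equivA d C x z -> d x y = al -> d y z = al -> d x z = al).
Proof.
move=> sC n0.
have [Y0 [nY0 o0]] := partner sC n0.
move: (o0) => [[m [X0m Y0m]] [[a [X0a Y0a]] _]].
exists (d a m), (d m a).
have g0 : Good d (d a m) (d m a) C X0.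
  split=> //; exists Y0, a, m; split; first exact: nY0.1.
  by do 4 split=> //; left.
have gall : forall N, nt d C N -> Good d (d a m) (d m a) C N.
  by move=> N nN; apply: good_all sC g0 nN.
have mC := strong_mod sC.
have CL1 : forall x y, C x -> C y -> ~ equivA d C x y ->
    inP (d a m) (d m a) (d x y, d y x).
  move=> x y Cx Cy nxy.
  set N := [set z | forall D, is_module d D -> D x -> D y -> D z].
  have mN : is_module d N by apply: smallest_mod.
  have Nx : N x by move=> D.
  have Ny : N y by move=> D.
  have NC : N `<=` C by move=> z Nz; apply: Nz.
  case: (pselect (C `<=` N)) => CN.
    have Hxy : forall D, is_module d D -> D x -> D y -> C `<=` D.
      by move=> D mD Dx Dy z Cz; apply: CN.
    have [H [V' [nH [nV [oHV [Hx [nHy Vy]]]]]]] := Hlemma sC n0 Cx Cy nxy Hxy.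
    apply: inP_swap.
    exact: (good_pairs (gall V' nV) nH.1 (overlap_sym oHV) Vy nHy Hx).
  have nN : nt d C N.
    split=> //; split=> //; split; first exact: notsub.
    by exists x, y.
  have [V' [nV oNV]] := partner sC nN.
  move: (oNV) => [[m' [Nm' Vm']] [[a' [Na' Va']] [b' [Vb' Nb']]]].
  case: (pselect (V' x)) => Vx; case: (pselect (V' y)) => Vy.
  - exfalso; apply: Va'.
    have := Na' (N `&` V') (mod_inter mN nV.1).
    by case=> //; split.
  - apply: inP_swap.
    exact: (good_pairs (gall N nN) nV.1 oNV Ny Vy Vx).
  - exact: (good_pairs (gall N nN) nV.1 oNV Nx Vx Vy).
  - exfalso.
    have := Nm' (N `\` V') (mod_diff mN nV.1 Vb' Nb').
    by case=> //; split.
split=> // neq x y z Cx Cy Cz nxy nyz nxz hxy hyz.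
apply: contrapT => hxz.
have [hzx hxz'] : d z x = d a m /\ d x z = d m a.
  by case: (CL1 x z Cx Cz nxz) => [[h1 h2]|[h1 h2]]; [exfalso; apply: hxz|].
have hyx : d y x = d m a.
  by case: (CL1 x y Cx Cy nxy) => [[h1 h2]|[h1 h2]] //; exfalso; apply: neq; rewrite -h1 hxy.
have hzy : d z y = d m a.
  by case: (CL1 y z Cy Cz nyz) => [[h1 h2]|[h1 h2]] //; exfalso; apply: neq; rewrite -h1 hyz.
have c1 : forall D, is_module d D -> D x -> D y -> D z.
  move=> D mD Dx Dy; apply: contrapT => nDz.
  have [h1 _] := mD z x y nDz Dx Dy; apply: neq; by rewrite -hzx h1 hzy.
have c2 : forall D, is_module d D -> D y -> D z -> D x.
  move=> D mD Dy Dz; apply: contrapT => nDx.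
  have [h1 _] := mD x y z nDx Dy Dz; apply: neq; by rewrite -hxy h1 hxz'.
have c3 : forall D, is_module d D -> D x -> D z -> D y.
  move=> D mD Dx Dz; apply: contrapT => nDy.
  have [h1 _] := mD y x z nDy Dx Dz; apply: neq; by rewrite -hyz -h1 hyx.
set N := [set z | forall D, is_module d D -> D x -> D y -> D z].
have mN : is_module d N by apply: smallest_mod.
have Nx : N x by move=> D.
have Ny : N y by move=> D.
have Nz : N z by move=> D mD Dx Dy; apply: c1.
have NC : N `<=` C by move=> w Nw; apply: Nw.
case: (pselect (C `<=` N)) => CN.
  have Hxy : forall D, is_module d D -> D x -> D y -> C `<=` D.
    by move=> D mD Dx Dy w Cw; apply: CN.
  have [H [V' [nH [nV [oHV [Hx [nHy Vy]]]]]]] := Hlemma sC n0 Cx Cy nxy Hxy.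
  have nHz : ~ H z by move=> Hz; apply: nHy; apply: c3 nH.1 Hx Hz.
  move: (oHV) => [[m' [Hm' Vm']] [[a' [Ha' Va']] _]].
  have Vz : V' z.
    apply: contrapT => nVz.
    have mU := mod_U2 nH.1 nV.1 Hm' Vm'.
    have := Hxy _ mU (or_introl Hx) (or_intror Vy) z Cz.
    by case.
  have Vx : V' x by apply: c2 nV.1 Vy Vz.
  by apply: Va'; exact: (Hxy _ nV.1 Vx Vy a' (nH.2.1 a' Ha')).
have nN : nt d C N.
  split=> //; split=> //; split; first exact: notsub.
  by exists x, y.
have [V' [nV oNV]] := partner sC nN.
move: (oNV) => [[m' [Nm' Vm']] [[a' [Na' Va']] [b' [Vb' Nb']]]].
have mI := mod_inter mN nV.1.
have mD := mod_diff mN nV.1 Vb' Nb'.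
have k1 : forall D, is_module d D -> (D x /\ D y) \/ (D y /\ D z) \/ (D x /\ D z) ->
    N `<=` D.
  move=> D mD' H w Nw; apply: Nw => //.
    by case: H => [[]|[[]|[]]] // => Dy Dz; apply: c2.
  by case: H => [[]|[[]|[]]] // => Dx Dz; apply: c3.
have e1 : ~ ((V' x /\ V' y) \/ (V' y /\ V' z) \/ (V' x /\ V' z)).
  move=> H; apply: Va'.
  have NI : N `<=` N `&` V'.
    apply: k1 mI _.
    by case: H => [[h1 h2]|[[h1 h2]|[h1 h2]]]; [left|right; left|right; right]; split; split.
  exact: (NI a' Na').2.
have e2 : ~ ((~ V' x /\ ~ V' y) \/ (~ V' y /\ ~ V' z) \/ (~ V' x /\ ~ V' z)).
  move=> H.
  have NI : N `<=` N `\` V'.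
    apply: k1 mD _.
    by case: H => [[h1 h2]|[[h1 h2]|[h1 h2]]]; [left|right; left|right; right]; split; split.
  exact: (NI m' Nm').2 Vm'.
case: (pselect (V' x)) => Vx; case: (pselect (V' y)) => Vy;
  case: (pselect (V' z)) => Vz; tauto.
Qed.

Lemma comp_eq (V W : Type) (d : V -> V -> W) C x y :
  equivA d C x y ->
  [set w | C w /\ equivA d C x w] = [set w | C w /\ equivA d C y w].
Proof.
move=> exy; rewrite eqEsubset; split => w [Cw e]; split=> //.
  exact: eqv_trans (eqv_sym exy) e.
exact: eqv_trans exy e.
Qed.

Lemma comp_neq (V W : Type) (d : V -> V -> W) C x y :
  C y -> ~ equivA d C x y ->
  [set w | C w /\ equivA d C x w] <> [set w | C w /\ equivA d C y w].
Proof.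
move=> Cy nxy E; apply: nxy.
have : [set w | C w /\ equivA d C y w] y by split=> //; left.
by rewrite -E => -[].
Qed.

Lemma CL (V W : Type) (d : V -> V -> W) C u v :
  is_strong d C -> C u -> C v -> ~ equivA d C u v -> ~ gallai_prime d C ->
  exists al be,
  (forall x y, C x -> C y -> ~ equivA d C x y -> inP al be (d x y, d y x)) /\
  (al <> be -> forall x y z, C x -> C y -> C z -> ~ equivA d C x y ->
     ~ equivA d C y z -> ~ equivA d C x z -> d x y = al -> d y z = al -> d x z = al).
Proof.
move=> sC Cu Cv nuv ngp.
have mC := strong_mod sC.
set P3 := exists I J K, components d C I /\ components d C J /\ components d C K /\
     I <> J /\ J <> K /\ I <> K.
case: (pselect P3) => p3.
  have nQ : ~ (forall X, quotient_module d C X ->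
    X = set0 \/ (exists I, X = [set I]) \/ X = components d C).
    by move=> H; apply: ngp; split.
  have [X' HX'] : exists X, ~ (quotient_module d C X ->
      X = set0 \/ (exists I, X = [set I]) \/ X = components d C).
    by apply/existsNP.
  have qX : quotient_module d C X' by apply: contrapT => H; apply: HX' => /H.
  have ntX : ~ (X' = set0 \/ (exists I, X' = [set I]) \/ X' = components d C).
    by move=> H; apply: HX'.
  move/not_orP: ntX => [n0 /not_orP [n1 n2]].
  move: qX => [XC qX].
  set N := [set z | exists I, X' I /\ I z].
  have NC : N `<=` C.
    by move=> z [I [XI Iz]]; have [i [_ EI]] := XC I XI; move: Iz; rewrite EI => -[].
  have mN : is_module d N.
    move=> z y y' nz [J [XJ Jy]] [J' [XJ' Jy']].
    case: (pselect (C z)) => Cz; last by apply: mC => //; apply: NC; [exists J|exists J'].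
    set I := [set w | C w /\ equivA d C z w].
    have cI : components d C I by exists z.
    have nXI : ~ X' I by move=> XI; apply: nz; exists I; split=> //; split=> //; left.
    apply: (qX I J J' cI nXI XJ XJ') => //; by split=> //; left.
  have [I1 XI1] : exists I, X' I.
    apply: contrapT => H; apply: n0; rewrite -subset0 => I XI; apply: H; by exists I.
  have [I2 [XI2 nI12]] : exists J, X' J /\ J <> I1.
    apply: contrapT => H; apply: n1; exists I1; rewrite eqEsubset; split=> J.
      by move=> XJ; apply: contrapT => nJ; apply: H; exists J.
    by move=> ->.
  have [i1 [Ci1 E1]] := XC I1 XI1.
  have [i2 [Ci2 E2]] := XC I2 XI2.
  have nX0 : nt d C N.
    split=> //; split=> //; split.
      apply: contrapT => H; apply: n2; rewrite eqEsubset; split=> // K [k [Ck EK]].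
      have Nk : N k by apply: contrapT => Nk; apply: H; exists k.
      move: Nk => [J [XJ Jk]]; have [j [Cj EJ]] := XC J XJ.
      move: Jk; rewrite EJ => -[_ ejk].
      by rewrite EK -(comp_eq ejk) -EJ.
    exists i1, i2; split; first by exists I1; split=> //; rewrite E1; split=> //; left.
    split; first by exists I2; split=> //; rewrite E2; split=> //; left.
    by move=> e12; apply: nI12; rewrite E1 E2 (comp_eq e12).
  exact: CLi sC nX0.
have two : forall z, C z -> equivA d C u z \/ equivA d C v z.
  move=> z Cz; apply: contrapT => /not_orP [nuz nvz]; apply: p3.
  exists [set w | C w /\ equivA d C u w], [set w | C w /\ equivA d C v w],
    [set w | C w /\ equivA d C z w].
  split; first by exists u. split; first by exists v. split; first by exists z.
  split; first exact: comp_neq. split; first by apply: comp_neq => // /eqv_sym.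
  exact: comp_neq.
exists (d u v), (d v u); split.
  move=> x y Cx Cy nxy.
  have key : forall p q, equivA d C u p -> equivA d C v q ->
      (d p q, d q p) = (d u v, d v u).
    move=> p q eup evq.
    have nqu : ~ equivA d C q u.
      by move=> equ; apply: nuv; exact: eqv_trans (eqv_sym equ) (eqv_sym evq).
    have [h1 h2] := eqv_same eup nqu.
    have [h3 h4] := eqv_same evq (fun e => nuv e).
    by rewrite -h2 -h1 -h3 -h4.
  case: (two x Cx) => ex; case: (two y Cy) => ey.
  - by exfalso; apply: nxy; apply: eqv_trans (eqv_sym ex) ey.
  - by left; apply: key.
  - by right; have := key _ _ ey ex; case=> -> ->.
  - by exfalso; apply: nxy; apply: eqv_trans (eqv_sym ex) ey.
move=> _ x y z Cx Cy Cz nxy nyz nxz.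
exfalso.
case: (two x Cx) => ex; case: (two y Cy) => ey; case: (two z Cz) => ez;
  solve [apply: nxy; apply: eqv_trans (eqv_sym ex) ey
        |apply: nyz; apply: eqv_trans (eqv_sym ey) ez
        |apply: nxz; apply: eqv_trans (eqv_sym ex) ez].
Qed.

Lemma ts_intro (V W : Type) (d : V -> V -> W) C x y :
  C x -> C y -> ~ equivA d C x y -> type_set d C (d x y).
Proof.
move=> Cx Cy nxy.
exists [set w | C w /\ equivA d C x w], [set w | C w /\ equivA d C y w].
split; first by exists x. split; first by exists y.
split; first exact: comp_neq.
by exists x, y; split; [split=> //; left|split=> //; split=> //; left].
Qed.

Lemma ts_elim (V W : Type) (d : V -> V -> W) C w :
  type_set d C w -> exists x y, C x /\ C y /\ ~ equivA d C x y /\ w = d x y.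
Proof.
move=> [I [J [[i [Ci EI]] [[j [Cj EJ]] [nIJ [x [y [Ix [Jy ->]]]]]]]]].
move: Ix Jy; rewrite EI EJ => -[Cx eix] [Cy ejy].
exists x, y; do 3 split=> //.
move=> exy; apply: nIJ; rewrite EI EJ; apply: comp_eq.
exact: eqv_trans eix (eqv_trans exy (eqv_sym ejy)).
Qed.

Lemma inP_comm (W : Type) (al be : W) p : inP al be p -> inP be al p.
Proof. by case=> ->; [right|left]. Qed.

Lemma trans_swap (V W : Type) (d : V -> V -> W) (R : set V) (E : V -> V -> Prop) al be :
  al <> be ->
  (forall x y, R x -> R y -> ~ E x y -> inP al be (d x y, d y x)) ->
  (forall x y, E x y -> E y x) ->
  (forall x y z, R x -> R y -> R z -> ~ E x y -> ~ E y z -> ~ E x z ->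
      d x y = al -> d y z = al -> d x z = al) ->
  (forall x y z, R x -> R y -> R z -> ~ E x y -> ~ E y z -> ~ E x z ->
      d x y = be -> d y z = be -> d x z = be).
Proof.
move=> nab C1 Es Tr x y z Rx Ry Rz nxy nyz nxz hxy hyz.
have hyx : d y x = al.
  by case: (C1 x y Rx Ry nxy) => -[h1 h2] //; exfalso; apply: nab; rewrite -h1 hxy.
have hzy : d z y = al.
  by case: (C1 y z Ry Rz nyz) => -[h1 h2] //; exfalso; apply: nab; rewrite -h1 hyz.
have hzx := Tr z y x Rz Ry Rx (fun e => nyz (Es _ _ e)) (fun e => nxy (Es _ _ e))
  (fun e => nxz (Es _ _ e)) hzy hyx.
by case: (C1 x z Rx Rz nxz) => -[h1 h2] //; exfalso; apply: nab; rewrite -hzx h2.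
Qed.

Lemma lin_contra (V W : Type) (d : V -> V -> W) A B x0 u v al be :
  is_module d A -> is_strong d B -> B `<=` A -> B x0 -> B u -> B v ->
  ~ equivA d B u v -> al <> be ->
  (forall x y, B x -> B y -> ~ equivA d B x y -> inP al be (d x y, d y x)) ->
  (forall x y z, B x -> B y -> B z -> ~ equivA d B x y ->
     ~ equivA d B y z -> ~ equivA d B x z -> d x y = al -> d y z = al -> d x z = al) ->
  (forall t, A t -> ~ B t ->
    (forall x y, S_M d [set x0; t] x -> S_M d [set x0; t] y ->
       ~ equivA d (S_M d [set x0; t]) x y -> inP al be (d x y, d y x)) /\
    (forall x y z, S_M d [set x0; t] x -> S_M d [set x0; t] y -> S_M d [set x0; t] z ->
       ~ equivA d (S_M d [set x0; t]) x y -> ~ equivA d (S_M d [set x0; t]) y z ->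
       ~ equivA d (S_M d [set x0; t]) x z -> d x y = al -> d y z = al -> d x z = al)) ->
  (forall t, A t -> ~ B t ->
    S_M d [set x0; t] x0 /\ S_M d [set x0; t] t /\ ~ equivA d (S_M d [set x0; t]) x0 t) ->
  (exists s, A s /\ ~ B s /\ d s x0 = al) -> False.
Proof.
move=> mA sB BA Bx0 Bu Bv nuv nab CL1B TrB HR HS [s0 [As0 [nBs0 hs0]]].
set R := fun t => S_M d [set x0; t].
have Pat : forall t, A t -> ~ B t -> inP al be (d t x0, d x0 t).
  move=> t At nBt; have [h1 [h2 h3]] := HS t At nBt.
  apply: (HR t At nBt).1 => // e; apply: h3; exact: eqv_sym e.
have patL : forall t, A t -> ~ B t -> d t x0 = al -> d x0 t = be.
  move=> t At nBt h; case: (Pat t At nBt) => -[h1 h2] //.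
  by exfalso; apply: nab; rewrite -h -h1.
have patU : forall t, A t -> ~ B t -> d t x0 <> al -> d t x0 = be /\ d x0 t = al.
  by move=> t At nBt h; case: (Pat t At nBt) => -[h1 h2].
have LU : forall s t, A s -> ~ B s -> A t -> ~ B t -> d s x0 = al -> d t x0 = be ->
    d s t = al /\ d t s = be.
  move=> s t As nBs At nBt hs ht.
  have [Rsx0 [Rss nes]] := HS s As nBs.
  have [Rtx0 [Rtt net]] := HS t At nBt.
  have [C1s Trs] := HR s As nBs.
  have [C1t Trt] := HR t At nBt.
  have hs' := patL s As nBs hs.
  have ht' : d x0 t = al.
    case: (Pat t At nBt) => -[h1 h2] //; by exfalso; apply: nab; rewrite -h1 ht.
  case: (strong_cmp (@SM_strong _ _ d [set x0; s]) (@SM_module _ _ d [set x0; t]) Rsx0 Rtx0) => sub.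
  - have Rts : R t s by apply: sub.
    case: (pselect (equivA d (R t) x0 s)) => e0s.
      have [h1 h2] := eqv_same e0s (fun e => net (eqv_sym e)).
      by rewrite -h1 -h2.
    have nst : ~ equivA d (R t) s t.
      move=> est; have [h1 h2] := eqv_same est (fun e => e0s e).
      by apply: nab; rewrite -hs h2.
    have hst := Trt s x0 t Rts Rtx0 Rtt (fun e => e0s (eqv_sym e)) net nst hs ht'.
    split=> //.
    case: (C1t s t Rts Rtt nst) => -[h1 h2] //; by exfalso; apply: nab; rewrite -h1 hst.
  - have Rst : R s t by apply: sub.
    case: (pselect (equivA d (R s) x0 t)) => e0t.
      have [h1 h2] := eqv_same e0t (fun e => nes (eqv_sym e)).
      by rewrite -h1 -h2.
    have nst : ~ equivA d (R s) s t.
      move=> est; have [h1 h2] := eqv_same (eqv_sym est) (fun e => e0t e).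
      by apply: nab; rewrite -hs -h2.
    have hst := Trs s x0 t Rss Rsx0 Rst (fun e => nes (eqv_sym e)) e0t nst hs ht'.
    split=> //.
    case: (C1s s t Rss Rst nst) => -[h1 h2] //; by exfalso; apply: nab; rewrite -h1 hst.
have [low [high [Blow [Bhigh [nlh hlh]]]]] : exists low high, B low /\ B high /\
    ~ equivA d B low high /\ d low high = al.
  case: (CL1B u v Bu Bv nuv) => -[h1 h2].
    by exists u, v.
  by exists v, u; do 2 split=> //; split=> // e; apply: nuv; exact: eqv_sym e.
have hhl : d high low = be.
  by case: (CL1B low high Blow Bhigh nlh) => -[h1 h2] //; exfalso; apply: nab; rewrite -h1 hlh.
set M := [set y | (A y /\ ~ B y /\ d y x0 = al) \/
                  (B y /\ (equivA d B y low \/ d y low = al))].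
have MA : M `<=` A by move=> y [[]|[/BA]].
have key : forall z, ~ M z -> A z -> forall m, M m -> d z m = be /\ d m z = al.
  move=> z nMz Az m Mm.
  case: (pselect (B z)) => Bz.
    have nzl : ~ equivA d B z low by move=> e; apply: nMz; right; split=> //; left.
    have hzl : d z low <> al by move=> e; apply: nMz; right; split=> //; right.
    have [hzl' hlz] : d z low = be /\ d low z = al.
      by case: (CL1B z low Bz Blow nzl) => -[h1 h2].
    case: Mm => [[Am [nBm hm]]|[Bm Hm]].
      have [h1 h2] := sB.1 m z x0 nBm Bz Bx0.
      by rewrite h1 h2 hm patL.
    case: (pselect (equivA d B m low)) => eml.
      have [h1 h2] := eqv_same (eqv_sym eml) nzl.
      by rewrite -h1 -h2.
    have hml : d m low = al by case: Hm.
    have nmz : ~ equivA d B m z.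
      move=> emz; have [h1 h2] := eqv_same emz (fun e => eml (eqv_sym e)).
      by apply: nab; rewrite -hml h2.
    have hmz := TrB m low z Bm Blow Bz eml (fun e => nzl (eqv_sym e)) nmz hml hlz.
    split=> //.
    by case: (CL1B m z Bm Bz nmz) => -[h1 h2] //; exfalso; apply: nab; rewrite -h1 hmz.
  have hz : d z x0 <> al by move=> e; apply: nMz; left.
  have [hz1 hz2] := patU z Az Bz hz.
  case: Mm => [[Am [nBm hm]]|[Bm Hm]].
    by have [h1 h2] := LU m z Am nBm Az Bz hm hz1.
  have [h1 h2] := sB.1 z m x0 Bz Bm Bx0.
  by rewrite h1 h2.
have mM : is_module d M.
  move=> z m m' nMz Mm Mm'.
  case: (pselect (A z)) => Az.
    have [h1 h2] := key z nMz Az m Mm; have [h3 h4] := key z nMz Az m' Mm'.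
    by rewrite h1 h2 h3 h4.
  by apply: mA => //; apply: MA.
case: (sB.2 M mM) => [BM|[MB|dis]].
- have := BM high Bhigh; case=> [[_ [//]]|[_ [e|e]]].
    by apply: nlh; apply: eqv_sym.
  by apply: nab; rewrite -e hhl.
- exact: nBs0 (MB s0 (or_introl (conj As0 (conj nBs0 hs0)))).
- apply: (meet0 dis Blow); right; split=> //; left; exact: eqv_refl.
Qed.

Definition CL1P (V W : Type) (d : V -> V -> W) (R : set V) (E : V -> V -> Prop) al be :=
  forall x y, R x -> R y -> ~ E x y -> inP al be (d x y, d y x).
Definition TrP (V W : Type) (d : V -> V -> W) (R : set V) (E : V -> V -> Prop) (al : W) :=
  forall x y z, R x -> R y -> R z -> ~ E x y -> ~ E y z -> ~ E x z ->
      d x y = al -> d y z = al -> d x z = al.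

Lemma normalize (V W : Type) (d : V -> V -> W) R E (al be alt bet : W) :
  al <> be -> (forall x y, E x y -> E y x) ->
  (alt = al /\ bet = be) \/ (alt = be /\ bet = al) ->
  CL1P d R E alt bet -> (alt <> bet -> TrP d R E alt) ->
  CL1P d R E al be /\ TrP d R E al /\ TrP d R E be.
Proof.
move=> nab Es [[-> ->]|[-> ->]] C1 Tr.
  have T1 := Tr nab; split=> //; split=> //.
  exact: trans_swap nab C1 Es T1.
have C1' : CL1P d R E al be.
  by move=> x y Rx Ry nxy; apply: inP_comm; apply: C1.
have T2 := Tr (fun e => nab (esym e)).
split=> //; split=> //.
exact: trans_swap (fun e => nab (esym e)) C1 Es T2.
Qed.

Lemma Rfacts (V W : Type) (d : V -> V -> W) A B x0 t :
  is_strong d A -> is_strong d B -> B `<=` A -> B x0 -> A t -> ~ B t ->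
  is_robust d (S_M d [set x0; t]) /\ B `<` S_M d [set x0; t] /\
  S_M d [set x0; t] `<=` A /\ S_M d [set x0; t] x0 /\ S_M d [set x0; t] t /\
  ~ equivA d (S_M d [set x0; t]) x0 t /\ is_strong d (S_M d [set x0; t]).
Proof.
move=> sA sB BA Bx0 At nBt.
have nx0t : x0 <> t by move=> e; apply: nBt; rewrite -e.
have Rx0 : S_M d [set x0; t] x0 by apply: SM_in; left.
have Rt : S_M d [set x0; t] t by apply: SM_in; right.
have BR : B `<=` S_M d [set x0; t].
  move=> y By D sD PD.
  case: (strong_cmp sB sD.1 Bx0 (PD x0 (or_introl erefl))) => H; first exact: H.
  by exfalso; apply: nBt; apply: H; apply: PD; right.
split; first by split; [apply: SM_module|right; exists x0, t].
split; first by split=> // H; apply: nBt; apply: H.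
split; first by apply: SM_sub => // z [->|->]; [apply: BA|].
do 3 split=> //; last exact: SM_strong.
exact: pair_neqv.
Qed.

Unset Implicit Arguments. Set Strict Implicit.

Theorem proposition6p10 (V W : Type) (d : V -> V -> W) (A B : set V) :
  is_robust d A -> is_robust d B -> atleast2 A -> atleast2 B ->
  B `<` A ->
  ~ gallai_prime d A -> ~ gallai_prime d B ->
  type_set d A = type_set d B ->
  exists C : set V, is_robust d C /\ B `<` C /\ C `<` A /\
    type_of d C <> type_of d A.
Proof.
move=> rA rB a2A a2B [BA nAB] ngA ngB hT.
have [a1 [a1' [na EA]]] := robust2 rA a2A.
have [u [v [nuv EB]]] := robust2 rB a2B.
have sA : is_strong d A by rewrite EA; apply: SM_strong.
have sB : is_strong d B by rewrite EB; apply: SM_strong.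
have Bu : B u by rewrite EB; apply: SM_in; left.
have Bv : B v by rewrite EB; apply: SM_in; right.
have nuvB : ~ equivA d B u v by rewrite EB; apply: pair_neqv.
apply: contrapT => nC.
have tA : type_of d A = Some (type_set d A).
  by rewrite /type_of; case: pselect.
have HR : forall t, A t -> ~ B t ->
    ~ gallai_prime d (S_M d [set u; t]) /\
    type_set d (S_M d [set u; t]) = type_set d A.
  move=> t At nBt.
  have [rR [pBR [RA _]]] := Rfacts sA sB BA Bu At nBt.
  case: (pselect (A `<=` S_M d [set u; t])) => AR.
    have E : S_M d [set u; t] = A by rewrite eqEsubset; split.
    by rewrite E.
  have hC : type_of d (S_M d [set u; t]) = type_of d A.
    apply: contrapT => ne; apply: nC; exists (S_M d [set u; t]).
    by do 3 split=> //.
  move: hC; rewrite tA /type_of; case: pselect => // ngR.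
  by case=> ->.
have [t0 [At0 nBt0]] := notsub nAB.
case: (pselect (exists a b, type_set d A a /\ type_set d A b /\ a <> b));
    last first.
  move=> allEq.
  have aE : forall a b, type_set d A a -> type_set d A b -> a = b.
    move=> a b Ta Tb; apply: contrapT => nab; apply: allEq; by exists a, b.
  set M := [set y | (B y /\ equivA d B u y) \/ (A y /\ ~ B y)].
  have MA : M `<=` A by move=> y [[/BA]|[]].
  have key : forall z, ~ M z -> A z -> forall m, M m -> d z m = d z u /\ d m z = d u z.
    move=> z nMz Az m Mm.
    have Bz : B z by apply: contrapT => nBz; apply: nMz; right.
    have nuz : ~ equivA d B u z by move=> e; apply: nMz; left.
    have Tzu : type_set d A (d z u).
      by rewrite hT; apply: ts_intro => // e; apply: nuz; apply: eqv_sym.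
    have Tuz : type_set d A (d u z) by rewrite hT; apply: ts_intro.
    case: Mm => [[Bm eum]|[Am nBm]].
      have [h1 h2] := eqv_same eum (fun e => nuz (eqv_sym e)).
      by rewrite h1 h2.
    have [h1 h2] := sB.1 m z u nBm Bz Bu.
    have [ngR TR] := HR m Am nBm.
    have [_ [_ [_ [Ru [Rm [num _]]]]]] := Rfacts sA sB BA Bu Am nBm.
    have Tum : type_set d A (d u m) by rewrite -TR; apply: ts_intro.
    have Tmu : type_set d A (d m u).
      by rewrite -TR; apply: ts_intro => // e; apply: num; apply: eqv_sym.
    rewrite h2 h1; split; apply: aE => //.
  have mM : is_module d M.
    move=> z m m' nMz Mm Mm'.
    case: (pselect (A z)) => Az.
      have [h1 h2] := key z nMz Az m Mm; have [h3 h4] := key z nMz Az m' Mm'.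
      by rewrite h1 h2 h3 h4.
    by apply: sA.1 => //; apply: MA.
  case: (sB.2 M mM) => [BM|[MB|dis]].
  - by case: (BM v Bv) => -[].
  - exact: nBt0 (MB t0 (or_intror (conj At0 nBt0))).
  - by apply: (meet0 dis Bu); left; split=> //; exact: eqv_refl.
move=> [a [b [Ta [Tb nab]]]].
have [al [be [C1B TrB0]]] := CL sB Bu Bv nuvB ngB.
have Tsub : forall w, type_set d A w -> w = al \/ w = be.
  move=> w; rewrite hT => Tw; have [x [y [Bx [By [nxy ->]]]]] := ts_elim Tw.
  by case: (C1B x y Bx By nxy) => -[-> _]; [left|right].
have nalbe : al <> be.
  move=> e; apply: nab.
  by case: (Tsub a Ta) => ->; case: (Tsub b Tb) => ->.
have [C1B' [TrB TrB']] : CL1P d B (equivA d B) al be /\ TrP d B (equivA d B) al /\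
    TrP d B (equivA d B) be.
  apply: (normalize nalbe (@eqv_sym _ _ d B) (or_introl (conj erefl erefl))) => //.
set R := fun t => S_M d [set u; t].
have HRt : forall t, A t -> ~ B t ->
    CL1P d (R t) (equivA d (R t)) al be /\ TrP d (R t) (equivA d (R t)) al /\
    TrP d (R t) (equivA d (R t)) be.
  move=> t At nBt.
  have [_ [_ [_ [Ru [Rt [nut sR]]]]]] := Rfacts sA sB BA Bu At nBt.
  have [ngR TR] := HR t At nBt.
  have [alt [bet [C1t Trt]]] := CL sR Ru Rt nut ngR.
  have Tut : type_set d A (d u t) by rewrite -TR; apply: ts_intro.
  have Ttu : type_set d A (d t u).
    by rewrite -TR; apply: ts_intro => // e; apply: nut; apply: eqv_sym.
  have [Talt Tbet] : type_set d A alt /\ type_set d A bet.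
    by case: (C1t u t Ru Rt nut) => -[<- <-].
  have inT : forall w, type_set d A w -> w = alt \/ w = bet.
    move=> w; rewrite -TR => Tw; have [x [y [Rx [Ry [nxy ->]]]]] := ts_elim Tw.
    by case: (C1t x y Rx Ry nxy) => -[-> _]; [left|right].
  have ntb : alt <> bet.
    move=> e; apply: nab.
    by case: (inT a Ta) => ->; case: (inT b Tb) => ->.
  apply: (normalize nalbe (@eqv_sym _ _ d (R t)) _ C1t Trt).
  case: (Tsub alt Talt) => ha; case: (Tsub bet Tbet) => hb.
  - by exfalso; apply: ntb; rewrite ha hb.
  - by left.
  - by right.
  - by exfalso; apply: ntb; rewrite ha hb.
have HS : forall t, A t -> ~ B t ->
    R t u /\ R t t /\ ~ equivA d (R t) u t.
  move=> t At nBt.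
  by have [_ [_ [_ [Ru [Rt [nut _]]]]]] := Rfacts sA sB BA Bu At nBt.
have [_ [_ [_ [Ru0 [Rt0 [nut0 _]]]]]] := Rfacts sA sB BA Bu At0 nBt0.
have P0 := (HRt t0 At0 nBt0).1 t0 u Rt0 Ru0 (fun e => nut0 (eqv_sym e)).
case: (pselect (d t0 u = al)) => h0.
  apply: (lin_contra sA.1 sB BA Bu Bu Bv nuvB nalbe C1B' TrB) => //.
    by move=> t At nBt; have [h1 [h2 _]] := HRt t At nBt.
  by exists t0.
apply: (lin_contra sA.1 sB BA Bu Bu Bv nuvB (fun e => nalbe (esym e))) => //.
- by move=> x y Bx By nxy; apply: inP_comm; apply: C1B'.
- move=> t At nBt; have [h1 [_ h3]] := HRt t At nBt; split=> //.
  by move=> x y Rx Ry nxy; apply: inP_comm; apply: h1.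
- exists t0; do 2 split=> //.
  by case: P0 => -[h1 h2].
Qed.
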